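(* Let $G$ be a graph with $V(G)=\{u_1,\ldots,u_n\}$ such that $\{u_1,\ldots,u_\ell\}$ induces a clique in $G$ and $\ell<n$. If $H_1,\ldots,H_\ell$ are pairwise disjoint complete graphs and $H_{\ell+1},\ldots,H_n$ are pairwise disjoint graphs (all $H_1,\ldots,H_n$ pairwise disjoint), then $box(G[H_1,H_2,\ldots,H_n])\leq \sum_{i=\ell+1}^{n} box(H_i)$.
   Context: All graphs are simple, finite and undirected. For a graph $G$ with vertex set $\{u_1,\ldots,u_n\}$ and pairwise disjoint graphs $H_1,\ldots,H_n$, the $G$-generalized join $G[H_1,\ldots,H_n]$ is the graph obtained from $G$ by replacing each vertex $u_i$ by $H_i$ and joining every vertex of $H_i$ to every vertex of $H_j$ whenever $u_i$ is adjacent to $u_j$ in $G$. The boxicity $box(G)$ is the least positive integer $\ell$ such that $G$ is isomorphic to the intersection graph of a family of $\ell$-boxes (Cartesian products of $\ell$ closed bounded real intervals). *)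

(* Defs.v *)
From Stdlib Require Import Reals ClassicalEpsilon.
From mathcomp Require Import all_boot.
Set Implicit Arguments. Unset Strict Implicit. Unset Printing Implicit Defensive.

Definition simple_graph (T : finType) (e : rel T) : Prop :=
  (forall x y, e x y = e y x) /\ (forall x, ~~ e x x).

(* A d-box is the product of d closed bounded intervals [fst (b k), snd (b k)]. *)
Definition box (d : nat) := 'I_d -> (R * R)%type.

Definition is_box (d : nat) (b : box d) : Prop :=
  forall k, Rle (fst (b k)) (snd (b k)).

Definition boxes_meet (d : nat) (b c : box d) : Prop :=
  forall k, Rle (fst (b k)) (snd (c k)) /\ Rle (fst (c k)) (snd (b k)).

Definition box_rep (T : finType) (e : rel T) (d : nat) : Prop :=
  exists f : T -> box d,
    (forall x, is_box (f x)) /\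
    (forall x y, x != y -> (e x y <-> boxes_meet (f x) (f y))).

Definition box_ok_b (T : finType) (e : rel T) (d : nat) : bool :=
  if excluded_middle_informative ((0 < d)%N /\ box_rep e d) then true else false.

(* boxicity: least positive d such that a d-box representation exists
   (0 if none exists, which never happens for finite graphs). *)
Definition boxicity (T : finType) (e : rel T) : nat :=
  match excluded_middle_informative (exists d, box_ok_b e d) with
  | left h => ex_minn h
  | right _ => 0
  end.

(* The G-generalized join G[H_1,...,H_n]: vertex set is the disjoint union
   {i : 'I_n & T i}; (i,x) ~ (j,y) iff (i = j and x ~_{H_i} y) or i ~_G j. *)
Definition gjoin (n : nat) (G : rel 'I_n) (T : 'I_n -> finType)
    (H : forall i, rel (T i)) : rel {i : 'I_n & T i} :=
  fun u v =>
    G (tag u) (tag v) ||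
    (if tag u =P tag v is ReflectT eq_ij
     then H (tag v) (ecast k (T k) eq_ij (tagged u)) (tagged v)
     else false).

(* Main.v *)
Require Import Defs.
From Stdlib Require Import Reals Lra ClassicalEpsilon.
From mathcomp Require Import all_boot.
Set Implicit Arguments. Unset Strict Implicit. Unset Printing Implicit Defensive.

Definition meet1 (p q : R * R) : Prop := Rle (fst p) (snd q) /\ Rle (fst q) (snd p).

Definition box_rep' (T : finType) (e : rel T) (K : finType) : Prop :=
  exists f : T -> K -> (R * R)%type,
    (forall x k, Rle (fst (f x k)) (snd (f x k))) /\
    (forall x y, x != y -> (e x y <-> forall k, meet1 (f x k) (f y k))).

Lemma rep'_rep (T : finType) (e : rel T) (K : finType) :
  box_rep' e K -> box_rep e #|K|.
Proof.
move=> [f [Hb Hm]]; exists (fun x k => f x (enum_val k)); split.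
  by move=> x k; apply: Hb.
move=> x y xy; rewrite (Hm _ _ xy); split.
  by move=> H k; apply: H.
move=> H k; rewrite -(enum_rankK k); exact: H.
Qed.

Lemma rep_rep' (T : finType) (e : rel T) d :
  box_rep e d -> box_rep' e 'I_d.
Proof. by move=> [f [Hb Hm]]; exists f. Qed.

Lemma box_ok_bP (T : finType) (e : rel T) d :
  box_ok_b e d -> (0 < d)%N /\ box_rep e d.
Proof. by rewrite /box_ok_b; case: excluded_middle_informative. Qed.

Lemma box_ok_bI (T : finType) (e : rel T) d :
  (0 < d)%N -> box_rep e d -> box_ok_b e d.
Proof. by move=> h1 h2; rewrite /box_ok_b; case: excluded_middle_informative => // -[]; split. Qed.

Lemma boxicity_min (T : finType) (e : rel T) d :
  box_ok_b e d -> (boxicity e <= d)%N.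
Proof.
move=> h; rewrite /boxicity; case: excluded_middle_informative => [ex|nex].
  by case: ex_minnP => m _ Hm; apply: Hm.
by exfalso; apply: nex; exists d.
Qed.

Section Ex.
Local Open Scope R_scope.
Lemma exists_rep (T : finType) (e : rel T) :
  simple_graph e -> exists d, box_ok_b e d.
Proof.
move=> [Hs Hi].
pose g (x : T) (k : option (T * T)) : (R * R)%type :=
  match k with
  | Some (p, q) => if (p != q) && ~~ e p q then
                     (if x == p then (0, 0) else if x == q then (1, 1) else (0, 1))
                   else (0, 1)
  | None => (0, 1)
  end.
have H : box_rep' e (option (T * T)).
  exists g; split.
    move=> x [[p q]|] /=; last (simpl; lra).
    case: ifP => _; last (simpl; lra).
    case: ifP => _; first (simpl; lra). case: ifP => _; simpl; lra.
  move=> x y xy; split.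
    move=> exy [[p q]|] /=; last (rewrite /meet1 /=; lra).
    case: ifP => /= [/andP [pq nepq]|_]; last (rewrite /meet1 /=; lra).
    have [xp|xp] := eqVneq x p; have [xq|xq] := eqVneq x q;
    have [yp|yp] := eqVneq y p; have [yq|yq] := eqVneq y q; subst;
      rewrite /meet1 /=; try lra; exfalso.
    all: try by move/eqP: xy.
    all: try by rewrite exy in nepq.
    all: try by rewrite Hs exy in nepq.
    all: try by rewrite eqxx in pq.
    idtac.
  move=> Hk; apply/negPn/negP => nexy.
  have := Hk (Some (x, y)); rewrite /= xy nexy eqxx /= eq_sym (negbTE xy) eqxx /meet1 /=.
  lra.
exists #|{: option (T * T)}|; apply: box_ok_bI; first by rewrite card_option.
exact: rep'_rep.
Qed.
End Ex.

Lemma boxicity_spec (T : finType) (e : rel T) :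
  simple_graph e -> box_ok_b e (boxicity e).
Proof.
move=> se; rewrite /boxicity; case: excluded_middle_informative => [ex|nex].
  by case: ex_minnP.
by exfalso; apply: nex; apply: exists_rep.
Qed.

Section Reals.
Local Open Scope R_scope.
Definition sh (p : R * R) : R * R := (atan (fst p) - 4, atan (snd p) - 4).
Definition out n (G : rel 'I_n) (i a : 'I_n) : R * R :=
  if G i a then (-10, 10) else (0, 1).

Lemma atan_le a b : a <= b <-> atan a <= atan b.
Proof.
split.
  case=> [h|->]; last lra. by left; apply: atan_increasing.
move=> h; destruct (Rle_or_lt a b) as [|h2]; first done.
have := atan_increasing _ _ h2; lra.
Qed.

Lemma sh_meet p q : meet1 (sh p) (sh q) <-> meet1 p q.
Proof.
rewrite /meet1 /sh /=; rewrite (atan_le (fst p)) (atan_le (fst q)); lra.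
Qed.

Lemma sh_bound p : -6 < fst (sh p) /\ snd (sh p) < -2 /\ -6 < snd (sh p) /\ fst (sh p) < -2.
Proof.
rewrite /sh /=; have := atan_bound (fst p); have := atan_bound (snd p);
have := PI_4; have := PI_RGT_0; intros; repeat split; lra.
Qed.

Lemma sh_box p : fst p <= snd p -> fst (sh p) <= snd (sh p).
Proof. rewrite /sh /= (atan_le (fst p)); lra. Qed.

Lemma out_box n (G : rel 'I_n) i a : fst (out G i a) <= snd (out G i a).
Proof. rewrite /out; case: ifP => _ /=; lra. Qed.

Lemma out_meet n (G : rel 'I_n) i a j b : meet1 (out G i a) (out G j b).
Proof. rewrite /out /meet1; do 2 case: ifP => _ /=; split; lra. Qed.

Lemma sh_out n (G : rel 'I_n) p i a : meet1 (sh p) (out G i a) <-> G i a.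
Proof.
have := sh_bound p; rewrite /out /meet1; case: ifP => _ /= hb; split => //.
- move=> _; split; lra.
- move=> [h1 h2]; lra.
Qed.
End Reals.

Definition J n (G : rel 'I_n) (T : 'I_n -> finType) (b : 'I_n -> nat)
  (F : forall i, T i -> 'I_(b i) -> (R * R)%type)
  (k : {i : 'I_n & 'I_(b i)}) (u : {i : 'I_n & T i}) : (R * R)%type :=
  if tag u =P tag k is ReflectT e then
    sh (F (tag k) (ecast t (T t) e (tagged u)) (tagged k))
  else out G (tag k) (tag u).

Lemma J_same n (G : rel 'I_n) (T : 'I_n -> finType) (b : 'I_n -> nat) (F : forall i, T i -> 'I_(b i) -> (R * R)%type) i (k : 'I_(b i)) (x : T i) :
  J G F (Tagged (fun i => 'I_(b i)) k) (Tagged T x) = sh (F i x k).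
Proof.
rewrite /J /=; case: eqP => // e.
by rewrite (eq_irrelevance e erefl).
Qed.

Lemma J_diff n (G : rel 'I_n) (T : 'I_n -> finType) (b : 'I_n -> nat) (F : forall i, T i -> 'I_(b i) -> (R * R)%type) i (k : 'I_(b i)) a (x : T a) :
  a != i -> J G F (Tagged (fun i => 'I_(b i)) k) (Tagged T x) = out G i a.
Proof. by move=> ne; rewrite /J /=; case: eqP => // e; rewrite e eqxx in ne. Qed.

Lemma gjoin_same n (G : rel 'I_n) (T : 'I_n -> finType) (H : forall i, rel (T i))
  i (x y : T i) : simple_graph G -> gjoin G H (Tagged T x) (Tagged T y) = H i x y.
Proof.
move=> [_ Gi]; rewrite /gjoin /= (negbTE (Gi i)) /=; case: eqP => // e.
by rewrite (eq_irrelevance e erefl).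
Qed.

Lemma gjoin_diff n (G : rel 'I_n) (T : 'I_n -> finType) (H : forall i, rel (T i))
  a b (x : T a) (y : T b) : a != b -> gjoin G H (Tagged T x) (Tagged T y) = G a b.
Proof.
move=> ne; rewrite /gjoin /=; case: eqP => [e|_]; last by rewrite orbF.
by rewrite e eqxx in ne.
Qed.
Lemma meet1C p q : meet1 p q <-> meet1 q p.
Proof. by rewrite /meet1; split => -[]. Qed.

Theorem theorem3p4 (n l : nat) (G : rel 'I_n) (T : 'I_n -> finType)
    (H : forall i, rel (T i)) :
  simple_graph G ->
  (forall i, simple_graph (H i)) ->
  (forall i, 0 < #|T i|) ->
  (forall i j : 'I_n, i < l -> j < l -> i != j -> G i j) ->
  l < n ->
  (forall i : 'I_n, i < l -> forall x y : T i, x != y -> H i x y) ->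
  boxicity (gjoin G H) <= \sum_(i < n | l <= i) boxicity (H i).
Proof.
move=> sG sH _ cl ln cH.
pose b' (i : 'I_n) := if l <= i then boxicity (H i) else 0.
have b'pos (i : 'I_n) : l <= i -> 0 < b' i.
  by move=> li; rewrite /b' li; case: (box_ok_bP (boxicity_spec (sH i))).
have Hex (i : 'I_n) : box_rep (H i) (b' i).
  rewrite /b'; case: ifP => li.
    by case: (box_ok_bP (boxicity_spec (sH i))).
  exists (fun _ _ => (R0, R0)).
  split; first by move=> x [].
  move=> x y xy; split; first by move=> _ [].
  by move=> _; apply: cH xy; rewrite ltnNge li.
pose F i := proj1_sig (constructive_indefinite_description _ (Hex i)).
have FP (i : 'I_n) : (forall x k, Rle (fst (F i x k)) (snd (F i x k))) /\
   (forall x y, x != y -> (H i x y <-> forall k, meet1 (F i x k) (F i y k))).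
  exact: (proj2_sig (constructive_indefinite_description _ (Hex i))).
pose K := {i : 'I_n & 'I_(b' i)}.
have rep : box_rep' (gjoin G H) K.
  exists (fun u k => J G F k u); split.
    move=> [a x] [i k] /=.
    have [e|ne] := eqVneq a i.
      subst a; rewrite J_same; apply: sh_box; exact: (proj1 (FP i)).
    by rewrite J_diff //; apply: out_box.
  move=> [a x] [b y] uv.
  have [e|ne] := eqVneq a b.
    subst b; rewrite gjoin_same //.
    have xy : x != y by apply: contraNneq uv => ->.
    rewrite (proj2 (FP a) x y xy); split.
      move=> Hm [i k].
      have [e|ne] := eqVneq a i.
        subst a; rewrite !J_same; apply/sh_meet; exact: Hm.
      rewrite !J_diff //; exact: out_meet.
    move=> Hm k; have := Hm (Tagged _ k); rewrite !J_same; move/sh_meet; done.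
  rewrite gjoin_diff //; split.
    move=> Gab [i k].
    have [e|nea] := eqVneq a i.
      subst a; rewrite J_same J_diff 1?eq_sym //; exact/sh_out.
    have [e|neb] := eqVneq b i.
      subst b; rewrite J_same J_diff //.
      apply/meet1C/sh_out; move: Gab; case: sG => -> _ //.
    rewrite !J_diff //; exact: out_meet.
  move=> Hm.
  case: (leqP l a) => la.
    have := Hm (Tagged (fun i => 'I_(b' i)) (Ordinal (b'pos a la))).
    by rewrite J_same J_diff 1?eq_sym // => /sh_out.
  case: (leqP l b) => lb.
    have := Hm (Tagged (fun i => 'I_(b' i)) (Ordinal (b'pos b lb))).
    rewrite J_diff // J_same => /meet1C/sh_out.
    by case: sG => ->.
  exact: cl.
have cardK : #|{: K}| = \sum_(i < n | l <= i) boxicity (H i).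
  rewrite card_tagged sumnE big_map big_enum /= [RHS]big_mkcond /=.
  by apply: eq_bigr => i _; rewrite card_ord.
have K0 : 0 < #|{: K}|.
  apply/card_gt0P.
  by exists (Tagged (fun i => 'I_(b' i)) (Ordinal (b'pos (Ordinal ln) (leqnn l)))).
rewrite -cardK; apply: boxicity_min; apply: box_ok_bI => //.
exact: rep'_rep.
Qed.
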